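(* Let $k$ be a difference field of characteristic $0$, $R=k\{y_1,\ldots,y_n\}$, $S\subseteq\mathbb{N}[x]^n$, and $I=\{\mathbf{y}^{\mathbf{u}}:\mathbf{u}\in S\}$ the perfect closure of these monomials. Then there exist $\mathbf{b}_1,\ldots,\mathbf{b}_s\in\{0,1\}^n$ such that \[I=\mathfrak{p}^{\mathbf{b}_1}\cap\cdots\cap\mathfrak{p}^{\mathbf{b}_s}.\] Moreover, if such a decomposition is irredundant, then it is unique.
   Context: A difference field is a field $k$ with a ring endomorphism $\sigma$. $R=k\{y_1,\ldots,y_n\}$ is the polynomial ring over $k$ in the variables $\sigma^j(y_i)$ ($1\le i\le n$, $j\ge0$), with $\sigma$ extended naturally. For $p=\sum_i c_ix^i\in\mathbb{N}[x]$ and $a\in R$, $a^p=\prod_i(\sigma^i(a))^{c_i}$; $\mathbf{y}^{\mathbf{u}}=y_1^{u_1}\cdots y_n^{u_n}$ for $\mathbf{u}\in\mathbb{N}[x]^n$. A $\sigma$-ideal is an ideal stable under $\sigma$; it is perfect if $a^g\in I$ implies $a\in I$ for all $a\in R$ and all nonzero $g\in\mathbb{N}[x]$. For $F\subseteq R$, $\{F\}$ denotes the smallest perfect $\sigma$-ideal containing $F$. For $\mathbf{b}\in\{0,1\}^n$, $\mathfrak{p}^{\mathbf{b}}$ is the $\sigma$-ideal generated by $\{y_i: b_i\neq0\}$. *)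

(* Defs.v *)
From HB Require Import structures.
From mathcomp Require Import all_boot all_order all_algebra.
From mathcomp Require Import finmap.
From mathcomp Require Import monalg.
Set Implicit Arguments. Unset Strict Implicit. Unset Printing Implicit Defensive.
Import GRing.Theory.
Local Open Scope ring_scope.

Section DifferencePolynomials.
Context (k : fieldType) (sigma : {rmorphism k -> k}) (n : nat).

(* R = k{y_1,...,y_n}: the polynomial ring over k in the infinitely many
   variables sigma^j(y_i), indexed by (i, j) : 'I_n * nat. *)
Definition dpoly := {malg k[cmonom ('I_n * nat)%type]}.

Definition dvar (i : 'I_n) (j : nat) : dpoly := << ucm (i, j) >>.

Definition dsigma (p : dpoly) : dpoly :=
  \sum_(m <- msupp p)
     sigma p@_m *: \prod_(x <- finsupp m) dvar x.1 x.2.+1 ^+ m x.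

Definition dpow (a : dpoly) (p : {poly nat}) : dpoly :=
  \prod_(i < size p) (iter i dsigma a) ^+ (p`_i)%R.

Definition dmonom (u : 'I_n -> {poly nat}) : dpoly :=
  \prod_(i < n) dpow (dvar i 0) (u i).

Definition is_ideal (I : dpoly -> Prop) : Prop :=
  [/\ I 0, (forall a b, I a -> I b -> I (a + b)) &
      (forall r a, I a -> I (r * a))].

Definition is_sigma_ideal (I : dpoly -> Prop) : Prop :=
  is_ideal I /\ (forall a, I a -> I (dsigma a)).

Definition is_perfect (I : dpoly -> Prop) : Prop :=
  forall (a : dpoly) (g : {poly nat}), g != 0 -> I (dpow a g) -> I a.

Definition perfect_closure (F : dpoly -> Prop) (a : dpoly) : Prop :=
  forall J, is_sigma_ideal J -> is_perfect J -> (forall x, F x -> J x) -> J a.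

Definition sigma_ideal_gen (F : dpoly -> Prop) (a : dpoly) : Prop :=
  forall J, is_sigma_ideal J -> (forall x, F x -> J x) -> J a.

Definition pb (b : {ffun 'I_n -> bool}) : dpoly -> Prop :=
  sigma_ideal_gen (fun a => exists2 i, b i & a = dvar i 0).

Definition monomial_perfect_ideal (S : ('I_n -> {poly nat}) -> Prop) :
    dpoly -> Prop :=
  perfect_closure (fun a => exists2 u, S u & a = dmonom u).

Definition capb (B : seq {ffun 'I_n -> bool}) (a : dpoly) : Prop :=
  forall b, b \in B -> pb b a.

Definition irredundant (B : seq {ffun 'I_n -> bool}) : Prop :=
  forall j, (j < size B)%N ->
    ~ (forall a, capb (take j B ++ drop j.+1 B) a <-> capb B a).

End DifferencePolynomials.

(* Main.v *)
Require Import Defs.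
From HB Require Import structures.
From mathcomp Require Import all_boot all_order all_algebra.
From mathcomp Require Import finmap.
From mathcomp Require Import monalg.
From mathcomp Require mpoly.
From mathcomp Require Import zify.
From Stdlib Require Import ClassicalEpsilon Classical.
Set Implicit Arguments. Unset Strict Implicit. Unset Printing Implicit Defensive.
Import GRing.Theory.
Local Open Scope ring_scope.

Lemma sum_pred1_seq (V : nmodType) (T : eqType) (s : seq T) (F : T -> V) a :
  uniq s -> \sum_(x <- s) F x *+ (x == a) = F a *+ (a \in s).
Proof.
elim: s => [|y s IH] /=; first by rewrite big_nil.
case/andP => ys us; rewrite big_cons IH // in_cons.
case: (eqVneq y a) => [<-|ya] /=.
  by rewrite (negbTE ys) mulr0n addr0.
by rewrite mulr0n add0r.
Qed.

Section Aux.
Context (k : fieldType) (sigma : {rmorphism k -> k}) (n : nat).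
Local Notation I := ('I_n * nat)%type.
Local Notation CM := (cmonom I).
Local Notation D := (dpoly k n).
Local Notation mU M := (mkmalgU M (1 : k) : D).

Lemma cmprodE (T : Type) (r : seq T) (P : pred T) (F : T -> CM) x :
  (\big[mmul/mone]_(t <- r | P t) F t) x = (\sum_(t <- r | P t) F t x)%N.
Proof. by apply: (big_morph (fun m : CM => m x)) => [a b|]; rewrite ?cmM ?cm1. Qed.

Lemma malgUM (c : k) (M1 M2 : CM) :
  (mkmalgU (mmul M1 M2) c : D) = mkmalgU M1 c * mU M2.
Proof. by rewrite malgM_def fgmulUU mulr1. Qed.

Lemma malgU1 : mU (mone : CM) = 1.
Proof. by []. Qed.

Lemma malgU_prod (T : Type) (r : seq T) (P : pred T) (F : T -> CM) :
  mU (\big[mmul/mone]_(t <- r | P t) F t) = \prod_(t <- r | P t) mU (F t).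
Proof. by apply: (big_morph (fun M => mU M)) => [a b|]; rewrite ?malgUM ?malgU1. Qed.

Lemma malgCU (c : k) (M : CM) : c%:MP * mU M = mkmalgU M c.
Proof. by rewrite malgM_def fgmulUU mulr1 mul1m. Qed.

Lemma dvarE (i : 'I_n) j : dvar k i j = mU (ucm (i, j)).
Proof. by []. Qed.

End Aux.

Lemma sum_pred1_nat (T : eqType) (s : seq T) (F : T -> nat) a :
  uniq s -> (\sum_(x <- s) F x * (x == a) = F a * (a \in s))%N.
Proof.
elim: s => [|y s IH] /=; first by rewrite big_nil muln0.
case/andP => ys us; rewrite big_cons IH // in_cons.
case: (eqVneq y a) => [<-|ya] /=.
  by rewrite (negbTE ys) muln0 addn0.
by rewrite muln0 add0n.
Qed.

Lemma sum_const_nat N (c : nat) : (\sum_(t < N) c = c * N)%N.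
Proof. by rewrite sum_nat_const card_ord mulnC. Qed.

Lemma prodr_const_ord (R : pzSemiRingType) N (x : R) : \prod_(i < N) x = x ^+ N.
Proof. by rewrite prodr_const card_ord. Qed.

Section Aux2.
Context (k : fieldType) (sigma : {rmorphism k -> k}) (n : nat).
Local Notation I := ('I_n * nat)%type.
Local Notation CM := (cmonom I).
Local Notation D := (dpoly k n).
Local Notation mU M := (mkmalgU M (1 : k) : D).

Definition sh (M : CM) : CM :=
  \big[mmul/mone]_(x <- finsupp M) \big[mmul/mone]_(t < M x) ucm (x.1, x.2.+1).

Lemma shS (M : CM) i j : sh M (i, j.+1) = M (i, j).
Proof.
rewrite /sh cmprodE.
transitivity (\sum_(x <- finsupp M) M x * (x == (i, j)))%N.
  apply: eq_bigr => [[x1 x2]] _; rewrite cmprodE.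
  under eq_bigr do rewrite cmU.
  by rewrite sum_const_nat mulnC !xpair_eqE eqSS.
rewrite sum_pred1_nat ?fset_uniq //.
by case: (boolP ((i, j) \in finsupp M)) => [_|]; rewrite ?muln1 // muln0 -cmE_eq0 => /eqP.
Qed.

Lemma sh0 (M : CM) i : sh M (i, 0%N) = 0%N.
Proof.
rewrite /sh cmprodE big1 // => x _; rewrite cmprodE big1 // => t _.
by rewrite cmU xpair_eqE andbF.
Qed.

Lemma sh_inj : injective sh.
Proof.
move=> M1 M2 e; apply/eqP/cmP => [[i j]].
by rewrite -(shS M1) -(shS M2) e.
Qed.

Lemma shM (M1 M2 : CM) : sh (mmul M1 M2) = mmul (sh M1) (sh M2).
Proof.
apply/eqP/cmP => [[i [|j]]]; by rewrite cmM ?sh0 ?shS ?cmM.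
Qed.

Lemma sh1 : sh (mone : CM) = mone.
Proof. by apply/eqP/cmP => [[i [|j]]]; rewrite ?sh0 ?shS !cm1. Qed.

Lemma shU (x : I) : sh (ucm x) = ucm (x.1, x.2.+1).
Proof.
apply/eqP/cmP => [[i [|j]]]; rewrite ?sh0 ?shS !cmU.
  by case: x => ? ?; rewrite xpair_eqE andbF.
by case: x => ? ?; rewrite !xpair_eqE eqSS.
Qed.

Definition hsh (M : CM) : D := mU (sh M).

Lemma hsh_mmorphism : mmorphism hsh.
Proof. split; last by rewrite /hsh sh1. by move=> x y; rewrite /hsh shM malgUM. Qed.

HB.instance Definition _ := isMultiplicative.Build CM D hsh hsh_mmorphism.

Definition sigC : k -> D := fun c => (sigma c)%:MP.

Lemma sigC_is_zmod : zmod_morphism sigC.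
Proof. by move=> x y; rewrite /sigC rmorphB /= raddfB. Qed.
HB.instance Definition _ := GRing.isZmodMorphism.Build k D sigC sigC_is_zmod.
Lemma sigC_is_mult : monoid_morphism sigC.
Proof. by split => [|x y]; rewrite /sigC ?rmorph1 ?rmorphM // rmorphM. Qed.
HB.instance Definition _ := GRing.isMonoidMorphism.Build k D sigC sigC_is_mult.

Lemma dsigmaE (p : D) : dsigma sigma p = mmap sigC hsh p.
Proof.
rewrite /dsigma mmapE; apply: eq_bigr => m _.
rewrite /sigC mul_malgC /hsh /sh malgU_prod; congr (_ *: _).
apply: eq_bigr => x _; rewrite malgU_prod prodr_const_ord.
by rewrite dvarE.
Qed.
End Aux2.

Section Aux3.
Context (k : fieldType) (sigma : {rmorphism k -> k}) (n : nat).
Local Notation I := ('I_n * nat)%type.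
Local Notation CM := (cmonom I).
Local Notation D := (dpoly k n).
Local Notation mU M := (mkmalgU M (1 : k) : D).
Local Notation ds := (@dsigma k sigma n).

Lemma dsD (p q : D) : ds (p + q) = ds p + ds q.
Proof. by rewrite !dsigmaE raddfD. Qed.
Lemma dsM (p q : D) : ds (p * q) = ds p * ds q.
Proof. by rewrite !dsigmaE rmorphM. Qed.
Lemma ds1 : ds (1 : D) = 1.
Proof. by rewrite !dsigmaE rmorph1. Qed.
Lemma ds0 : ds (0 : D) = 0.
Proof. by rewrite !dsigmaE raddf0. Qed.
Lemma ds_sum (T : Type) (r : seq T) (P : pred T) (F : T -> D) :
  ds (\sum_(t <- r | P t) F t) = \sum_(t <- r | P t) ds (F t).
Proof. by rewrite !dsigmaE raddf_sum; apply: eq_bigr => *; rewrite dsigmaE. Qed.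
Lemma ds_prod (T : Type) (r : seq T) (P : pred T) (F : T -> D) :
  ds (\prod_(t <- r | P t) F t) = \prod_(t <- r | P t) ds (F t).
Proof. by rewrite !dsigmaE rmorph_prod; apply: eq_bigr => *; rewrite dsigmaE. Qed.
Lemma dsX (p : D) c : ds (p ^+ c) = ds p ^+ c.
Proof. by rewrite !dsigmaE rmorphXn. Qed.

Lemma dsU (c : k) (M : CM) : ds (mkmalgU M c) = mkmalgU (sh M) (sigma c : k).
Proof. by rewrite dsigmaE mmapU /sigC /hsh malgCU. Qed.

Lemma ds_dvar (i : 'I_n) j : ds (dvar k i j) = dvar k i j.+1.
Proof. by rewrite !dvarE dsU shU rmorph1. Qed.

Lemma iter_ds_dvar t (i : 'I_n) j : iter t ds (dvar k i j) = dvar k i (j + t)%N.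
Proof. elim: t => [|t IH]; first (rewrite addn0; reflexivity). rewrite iterS IH ds_dvar addnS; reflexivity. Qed.

Lemma iter_dsM t (p q : D) : iter t ds (p * q) = iter t ds p * iter t ds q.
Proof. elim: t => [|t IH]; first reflexivity. rewrite iterS IH dsM; reflexivity. Qed.
Lemma iter_ds1 t : iter t ds (1 : D) = 1.
Proof. elim: t => [|t IH]; first reflexivity. rewrite iterS IH ds1; reflexivity. Qed.
Lemma iter_ds_prod t (T : Type) (r : seq T) (P : pred T) (F : T -> D) :
  iter t ds (\prod_(x <- r | P x) F x) = \prod_(x <- r | P x) iter t ds (F x).
Proof.
by apply: (big_morph (iter t ds)) => [a b|]; rewrite ?iter_dsM ?iter_ds1.
Qed.
Lemma iter_dsX t (p : D) c : iter t ds (p ^+ c) = iter t ds p ^+ c.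
Proof. by rewrite -!prodr_const_ord iter_ds_prod. Qed.

Lemma ds_coef (p : D) (M : CM) : (ds p)@_(sh M) = sigma p@_M.
Proof.
rewrite {1}(monalgE p) ds_sum raddf_sum /=.
under eq_bigr do rewrite dsU mcoeffU (inj_eq (@sh_inj n)).
rewrite sum_pred1_seq ?fset_uniq //.
case: (boolP (M \in msupp p)) => [_|H]; first by rewrite mulr1n.
by rewrite mulr0n mcoeff_outdom // rmorph0.
Qed.

Lemma ds_neq0 (p : D) : p != 0 -> ds p != 0.
Proof.
rewrite -msupp_eq0 => /fset0Pn [M MP].
apply/eqP => /(congr1 (mcoeff (sh M))); rewrite ds_coef mcoeff0 => /eqP.
by rewrite fmorph_eq0 mcoeff_eq0 MP.
Qed.

Lemma iter_ds_neq0 t (p : D) : p != 0 -> iter t ds p != 0.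
Proof. elim: t => [|t IH]; first by []. by rewrite iterS => /IH /ds_neq0. Qed.
End Aux3.

Section Aux4.
Context (k : fieldType) (sigma : {rmorphism k -> k}) (n : nat).
Local Notation I := ('I_n * nat)%type.
Local Notation CM := (cmonom I).
Local Notation D := (dpoly k n).
Local Notation mU M := (mkmalgU M (1 : k) : D).
Local Notation ds := (@dsigma k sigma n).
Variable b : {ffun 'I_n -> bool}.

Definition good (M : CM) : bool := all (fun x : I => ~~ b x.1) (finsupp M).

Lemma goodM (M1 M2 : CM) : good (mmul M1 M2) = good M1 && good M2.
Proof.
rewrite /good mdomD; apply/allP/andP => [H|[/allP H1 /allP H2] x].
  by split; apply/allP => x xin; apply: H; rewrite in_fsetU xin ?orbT.
by rewrite in_fsetU => /orP[/H1|/H2].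
Qed.

Lemma good1 : good (mone : CM).
Proof. by rewrite /good mdom1. Qed.

Lemma goodU x : good (ucm x) = ~~ b x.1.
Proof.
rewrite /good mdomU; apply/allP/idP => [H|H y]; first by apply: H; rewrite in_fset1.
by rewrite in_fset1 => /eqP ->.
Qed.

Lemma good_sh (M : CM) : good (sh M) = good M.
Proof.
rewrite /good; apply/allP/allP => H [i j].
  rewrite -cmE_neq0 -shS cmE_neq0 => /H //.
case: j => [|j]; first by rewrite -cmE_neq0 sh0 eqxx.
by rewrite -cmE_neq0 shS cmE_neq0 => /H.
Qed.

Definition hb (M : CM) : D := if good M then mU M else 0.

Lemma hb_mmorphism : mmorphism hb.
Proof.
split; last by rewrite /hb good1.
move=> x y; rewrite /hb goodM.
by case: (good x); case: (good y); rewrite ?mulr0 ?mul0r // malgUM.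
Qed.
HB.instance Definition _ := isMultiplicative.Build CM D hb hb_mmorphism.

Definition cC : k -> D := fun c => c%:MP.
Lemma cC_is_zmod : zmod_morphism cC.
Proof. by move=> x y; rewrite /cC raddfB. Qed.
HB.instance Definition _ := GRing.isZmodMorphism.Build k D cC cC_is_zmod.
Lemma cC_is_mult : monoid_morphism cC.
Proof. by split => [|x y]; rewrite /cC ?rmorph1 // rmorphM. Qed.
HB.instance Definition _ := GRing.isMonoidMorphism.Build k D cC cC_is_mult.

Definition phi (p : D) : D := mmap cC hb p.

Lemma phiD p q : phi (p + q) = phi p + phi q. Proof. exact: raddfD. Qed.
Lemma phiM p q : phi (p * q) = phi p * phi q. Proof. exact: rmorphM. Qed.
Lemma phi0 : phi 0 = 0. Proof. exact: raddf0. Qed.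
Lemma phi1 : phi 1 = 1. Proof. exact: rmorph1. Qed.
Lemma phiX p c : phi (p ^+ c) = phi p ^+ c. Proof. exact: rmorphXn. Qed.
Lemma phi_prod (T : Type) (r : seq T) (P : pred T) (F : T -> D) :
  phi (\prod_(t <- r | P t) F t) = \prod_(t <- r | P t) phi (F t).
Proof. exact: rmorph_prod. Qed.
Lemma phi_sum (T : Type) (r : seq T) (P : pred T) (F : T -> D) :
  phi (\sum_(t <- r | P t) F t) = \sum_(t <- r | P t) phi (F t).
Proof. exact: raddf_sum. Qed.

Lemma phiU (c : k) (M : CM) : phi (mkmalgU M c) = if good M then mkmalgU M c else 0.
Proof.
rewrite /phi mmapU /cC /hb; case: (good M); first by rewrite malgCU.
by rewrite mulr0.
Qed.

Lemma phi_coef (p : D) (M : CM) : (phi p)@_M = if good M then p@_M else 0.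
Proof.
rewrite {1}(monalgE p) phi_sum raddf_sum /=.
transitivity (\sum_(m <- msupp p) (if good M then p@_m else 0) *+ (m == M)).
  apply: eq_bigr => m _; rewrite phiU.
  case: (eqVneq m M) => [->|mM]; first by case: (good M); rewrite ?mcoeffUU ?mcoeff0.
  by case: (good m); rewrite ?mcoeffU ?mcoeff0 ?(negbTE mM) ?mulr0n.
rewrite sum_pred1_seq ?fset_uniq //.
case: (good M); last by rewrite mul0rn.
case: (boolP (M \in msupp p)) => [_|H]; first by rewrite mulr1n.
by rewrite mulr0n mcoeff_outdom.
Qed.

Lemma phi_ds (p : D) : phi (ds p) = ds (phi p).
Proof.
have E := monalgE p.
transitivity (phi (ds (\sum_(m <- msupp p) mkmalgU m p@_m))).
  exact: (congr1 (fun x => phi (ds x)) E).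
transitivity (ds (phi (\sum_(m <- msupp p) mkmalgU m p@_m))); last first.
  exact: (congr1 (fun x => ds (phi x)) (esym E)).
rewrite ds_sum phi_sum [X in _ = ds X]phi_sum ds_sum; apply: eq_bigr => m _.
rewrite dsU [in LHS]phiU [in RHS]phiU good_sh.
case: (good m); [rewrite dsU; reflexivity | rewrite ds0; reflexivity].
Qed.

Lemma phi_iter_ds t (p : D) : phi (iter t ds p) = iter t ds (phi p).
Proof. elim: t => [|t IH]; first reflexivity. rewrite !iterS phi_ds IH; reflexivity. Qed.

Lemma phi_dpow (p : D) g : phi (dpow sigma p g) = dpow sigma (phi p) g.
Proof.
rewrite /dpow phi_prod; apply: eq_bigr => i _; rewrite phiX phi_iter_ds; reflexivity.
Qed.

Lemma phi_dvar (i : 'I_n) j : phi (dvar k i j) = if b i then 0 else dvar k i j.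
Proof. by rewrite dvarE phiU goodU; case: (b i). Qed.
End Aux4.

Section Aux5.
Context (k : fieldType) (sigma : {rmorphism k -> k}) (n : nat).
Local Notation I := ('I_n * nat)%type.
Local Notation CM := (cmonom I).
Local Notation D := (dpoly k n).
Local Notation mU M := (mkmalgU M (1 : k) : D).
Local Notation ds := (@dsigma k sigma n).

Lemma ideal_sum (J : D -> Prop) (T : eqType) (r : seq T) (F : T -> D) :
  is_ideal J -> (forall x, x \in r -> J (F x)) -> J (\sum_(x <- r) F x).
Proof.
case=> J0 JD _; elim: r => [|y r IH] H; first by rewrite big_nil.
rewrite big_cons; apply: JD; first by apply: H; rewrite in_cons eqxx.
by apply: IH => x xr; apply: H; rewrite in_cons xr orbT.
Qed.

Lemma ideal_mulr (J : D -> Prop) a r : is_ideal J -> J a -> J (a * r).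
Proof. by case=> _ _ JM Ja; rewrite mulrC; apply: JM. Qed.

Lemma ideal_mull (J : D -> Prop) a r : is_ideal J -> J a -> J (r * a).
Proof. by case=> _ _ JM Ja; apply: JM. Qed.

Lemma sig_iter (J : D -> Prop) a t : is_sigma_ideal sigma J -> J a -> J (iter t ds a).
Proof.
case=> _ Js Ja; elim: t => [|t IH]; first exact: Ja.
rewrite iterS; exact: Js.
Qed.

Lemma cm_split (m : CM) x : x \in finsupp m -> m = mmul (divcm m (ucm x)) (ucm x).
Proof.
rewrite -cmE_neq0 -lt0n => mx; apply/eqP/cmP => y.
rewrite cmM divcmE cmU; case: (eqVneq x y) => [<-|_]; last by rewrite subn0 addn0.
by rewrite subnK.
Qed.

Variable b : {ffun 'I_n -> bool}.
Local Notation gens := (fun a : D => exists2 i, b i & a = dvar k i 0).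

Lemma pb_sigma_ideal : is_sigma_ideal sigma (pb sigma b).
Proof.
split; first split.
- by move=> J [[J0 _ _] _] _.
- by move=> x y Hx Hy J HJ Hg; case: (HJ) => [[_ JD _] _]; apply: JD; [apply: Hx|apply: Hy].
- by move=> r x Hx J HJ Hg; case: (HJ) => [[_ _ JM] _]; apply: JM; apply: Hx.
- by move=> x Hx J HJ Hg; case: (HJ) => [_ Js]; apply: Js; apply: Hx.
Qed.

Lemma pb_dvar (i : 'I_n) j : b i -> pb sigma b (dvar k i j).
Proof.
move=> bi J HJ Hg; rewrite -[j]add0n -(iter_ds_dvar sigma).
by apply: sig_iter => //; apply: Hg; exists i.
Qed.

Lemma pb_phi a : pb sigma b a -> phi b a = 0.
Proof.
move=> H; apply: (H (fun a => phi b a = 0)); last by move=> x [i bi ->]; rewrite phi_dvar bi.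
split; first split.
- exact: phi0.
- by move=> x y Hx Hy; rewrite phiD Hx Hy addr0.
- by move=> r x Hx; rewrite phiM Hx mulr0.
- by move=> x Hx; rewrite phi_ds Hx ds0.
Qed.

Lemma phi_pb a : phi b a = 0 -> pb sigma b a.
Proof.
move=> Ha J HJ Hg; rewrite (monalgE a); apply: ideal_sum; first by case: HJ.
move=> m ma.
have : ~~ good b m.
  apply/negP => gm; move: (phi_coef b a m); rewrite Ha mcoeff0 gm => /esym/eqP.
  by rewrite mcoeff_eq0 ma.
case/allPn => x xm /negPn bx.
rewrite (cm_split xm) malgUM; apply: ideal_mull; first by case: HJ.
have -> : mU (ucm x) = dvar k x.1 x.2 by case: x {xm bx}.
rewrite -[x.2]add0n -(iter_ds_dvar sigma); apply: sig_iter => //; apply: Hg; by exists x.1.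
Qed.

Lemma pbE a : pb sigma b a <-> phi b a = 0.
Proof. by split; [apply: pb_phi | apply: phi_pb]. Qed.
End Aux5.

Lemma pb_sub (k : fieldType) (sigma : {rmorphism k -> k}) (n : nat) (b1 b2 : {ffun 'I_n -> bool}) :
  (forall i, b1 i -> b2 i) -> forall a, pb sigma b1 a -> pb sigma b2 a.
Proof.
move=> H a Ha; apply: Ha; first exact: pb_sigma_ideal.
by move=> x [i bi ->]; apply: pb_dvar; apply: H.
Qed.

Module DomM.
Import mpoly.
Import monalg.
Section Dom.
Context (k : fieldType) (n : nat).
Local Notation I := ('I_n * nat)%type.
Local Notation CM := (cmonom I).
Local Notation D := (dpoly k n).
Variable Vs : seq I.
Local Notation N := (size Vs).

Definition enc (M : CM) : mpoly.multinom N :=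
  mpoly.Multinom [tuple M (tnth (in_tuple Vs) j) | j < N].

Lemma encE M j : mpoly.fun_of_multinom (enc M) j = M (tnth (in_tuple Vs) j).
Proof. by rewrite /mpoly.fun_of_multinom tnth_mktuple. Qed.

Lemma encM M1 M2 : enc (mmul M1 M2) = mpoly.mnm_add (enc M1) (enc M2).
Proof. by apply/mpoly.mnmP => j; rewrite mpoly.mnmDE !encE cmM. Qed.

Lemma enc1 : enc mone = mpoly.mnm0.
Proof. by apply/mpoly.mnmP => j; rewrite mpoly.mnm0E !encE cm1. Qed.

Definition hE (M : CM) : mpoly.mpoly N k := @mpoly.mpolyX N k (enc M).

Lemma hE_mmorphism : mmorphism hE.
Proof.
split; last by rewrite /hE enc1 mpoly.mpolyX0.
by move=> x y; rewrite /hE encM mpoly.mpolyXD.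
Qed.
HB.instance Definition _ := isMultiplicative.Build CM (mpoly.mpoly N k) hE hE_mmorphism.

Definition psi (p : D) : mpoly.mpoly N k := monalg.mmap (@mpoly.mpolyC N k) hE p.

Lemma enc_inj (M1 M2 : CM) : {subset finsupp M1 <= Vs} -> {subset finsupp M2 <= Vs} ->
  enc M1 = enc M2 -> M1 = M2.
Proof.
move=> H1 H2 e; apply/eqP/cmP => x.
case: (boolP (x \in Vs)) => xV.
  have ix : (index x Vs < N)%N by rewrite index_mem.
  have tx : tnth (in_tuple Vs) (Ordinal ix) = x by rewrite (tnth_nth x) /= nth_index.
  by rewrite -tx -!encE e.
have f1 : x \notin finsupp M1 by apply: contra xV; apply: H1.
have f2 : x \notin finsupp M2 by apply: contra xV; apply: H2.
by move: f1 f2; rewrite -!cmE_eq0 => /eqP -> /eqP ->.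
Qed.

Lemma psi_coef (p : D) (M : CM) : (forall m : CM, m \in monalg.msupp p -> {subset finsupp m <= Vs}) ->
  M \in monalg.msupp p -> mpoly.mcoeff (enc M) (psi p) = (monalg.mcoeff M p).
Proof.
move=> H Mp; rewrite /psi monalg.mmapE raddf_sum /=.
transitivity (\sum_(m <- monalg.msupp p) (monalg.mcoeff m p) *+ (m == M)).
  apply: eq_big_seq => m mp; rewrite mpoly.mcoeffCM mpoly.mcoeffX.
  case: (eqVneq m M) => [->|mM]; first by rewrite eqxx mulr1.
  case: (eqVneq (enc m) (enc M)) => [/(enc_inj (H _ mp) (H _ Mp))|_]; first by move/eqP: mM.
  by rewrite mulr0.
by rewrite sum_pred1_seq ?fset_uniq // Mp mulr1n.
Qed.

Lemma psi_neq0 (p : D) : (forall m : CM, m \in monalg.msupp p -> {subset finsupp m <= Vs}) ->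
  p != 0 -> psi p != 0.
Proof.
move=> H; rewrite -monalg.msupp_eq0 => /fset0Pn [M Mp].
apply/eqP => /(congr1 (mpoly.mcoeff (enc M))); rewrite psi_coef // => e.
by move: Mp; rewrite -monalg.mcoeff_neq0 e raddf0 eqxx.
Qed.
End Dom.

Section Dom2.
Context (k : fieldType) (n : nat).
Local Notation D := (dpoly k n).

Lemma dpoly_mulf_neq0 (p q : D) : p != 0 -> q != 0 -> p * q != 0.
Proof.
move=> p0 q0.
pose Vs := flatten [seq enum_fset (finsupp m) | m : cmonom (prod (ordinal n) nat) <- enum_fset (monalg.msupp p) ++ enum_fset (monalg.msupp q)].
have HV r : (r = p) \/ (r = q) -> forall m, m \in monalg.msupp r -> {subset finsupp m <= Vs}.
  move=> hr m mr x xm; apply/flattenP; exists (enum_fset (finsupp m)) => //.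
  apply: map_f; rewrite mem_cat.
  by case: hr => ?; subst r; rewrite mr ?orbT.
have Pp := psi_neq0 (HV p (or_introl erefl)) p0.
have Pq := psi_neq0 (HV q (or_intror erefl)) q0.
apply/eqP => pq.
have : psi Vs (p * q) = 0 by rewrite pq /psi raddf0.
by rewrite /psi rmorphM => /eqP; rewrite mulf_eq0 -!/(psi _ _) (negbTE Pp) (negbTE Pq).
Qed.

End Dom2.
End DomM.
Import DomM.
Section Dom3.
Context (k : fieldType) (n : nat).
Local Notation D := (dpoly k n).
Lemma dpoly_prod_neq0 (T : Type) (r : seq T) (P : pred T) (F : T -> D) :
  (forall t, P t -> F t != 0) -> \prod_(t <- r | P t) F t != 0.
Proof.
move=> H; apply: (big_ind (fun x : D => x != 0)) => //.
- by rewrite oner_eq0.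
- by move=> x y; apply: dpoly_mulf_neq0.
Qed.

Lemma dpoly_expf_neq0 (p : D) c : p != 0 -> p ^+ c != 0.
Proof. by move=> p0; rewrite -prodr_const_ord; apply: dpoly_prod_neq0. Qed.
End Dom3.

Section Aux7.
Context (k : fieldType) (sigma : {rmorphism k -> k}) (n : nat).
Local Notation I := ('I_n * nat)%type.
Local Notation CM := (cmonom I).
Local Notation D := (dpoly k n).
Local Notation mU M := (mkmalgU M (1 : k) : D).
Local Notation ds := (@dsigma k sigma n).

Lemma dpow_neq0 (p : D) g : p != 0 -> dpow sigma p g != 0.
Proof.
move=> p0; rewrite /dpow; apply: dpoly_prod_neq0 => i _.
by apply: dpoly_expf_neq0; apply: iter_ds_neq0.
Qed.

Lemma pb_perfect (b : {ffun 'I_n -> bool}) : is_perfect sigma (pb sigma b).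
Proof.
move=> a g g0 /pbE; rewrite phi_dpow => H; apply/pbE.
case: (eqVneq (phi b a) 0) => // /(dpow_neq0 g); by rewrite H eqxx.
Qed.

Lemma iter_ds0 t : iter t ds (0 : D) = 0.
Proof. elim: t => [|t IH]; first reflexivity. by rewrite iterS IH ds0. Qed.

Lemma dpow0 (g : {poly nat}) : g != 0 -> dpow sigma (0 : D) g = 0.
Proof.
rewrite -size_poly_eq0 /dpow; case E: (size g) => [//|s] _.
rewrite big_ord_recr /= iter_ds0 expr0n.
have -> : (g`_s == 0%N) = false.
  by apply/negbTE; move: (lead_coef_eq0 g); rewrite /lead_coef E /= => ->; rewrite -size_poly_eq0 E.
by rewrite mulr0.
Qed.

Lemma dmonom_pb (b : {ffun 'I_n -> bool}) (u : 'I_n -> {poly nat}) i :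
  b i -> u i != 0 -> pb sigma b (dmonom sigma u).
Proof.
move=> bi ui; apply/pbE; rewrite /dmonom phi_prod (bigD1 i) //=.
by rewrite phi_dpow phi_dvar bi dpow0 // mul0r.
Qed.

Lemma dvar_neq0 (i : 'I_n) j : dvar k i j != 0.
Proof. by rewrite dvarE monalgU_eq0 oner_eq0. Qed.

Lemma capb_sub (B : seq {ffun 'I_n -> bool}) (b : {ffun 'I_n -> bool}) :
  (forall a, capb sigma B a -> pb sigma b a) ->
  exists2 b', b' \in B & forall i, b' i -> b i.
Proof.
move=> H.
case: (boolP (has (fun b' : {ffun 'I_n -> bool} => [forall i, b' i ==> b i]) B)).
  case/hasP => b' b'B /forallP Hb'; exists b' => // i; exact/implyP/Hb'.
move/hasPn => Hn.
pose F (b' : {ffun 'I_n -> bool}) : D :=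
  if [pick i | b' i && ~~ b i] is Some i then dvar k i 0 else 1.
have HF b' : b' \in B -> exists2 i, b' i && ~~ b i & F b' = dvar k i 0.
  move=> /Hn; rewrite negb_forall => /existsP [i].
  rewrite negb_imply => Hi; rewrite /F; case: pickP => [j Hj|/(_ i)]; last by rewrite Hi.
  by exists j.
have Hz : capb sigma B (\prod_(b' <- B) F b').
  move=> b' b'B; rewrite (big_rem b') //=.
  case: (HF b' b'B) => i /andP [bi _] ->.
  apply: (ideal_mulr (J := pb sigma b')); first by case: (pb_sigma_ideal sigma b').
  exact: pb_dvar.
exfalso; have := H _ Hz; rewrite pbE phi_prod; apply/eqP.
rewrite big_seq_cond; apply: dpoly_prod_neq0 => b' /andP [b'B _].
case: (HF b' b'B) => i /andP [_ bi] ->; rewrite phi_dvar (negbTE bi).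
exact: dvar_neq0.
Qed.

Lemma mem_remove (T : eqType) (B : seq T) x j (x0 : T) :
  (j < size B)%N -> x \in B -> x != nth x0 B j -> x \in take j B ++ drop j.+1 B.
Proof.
move=> jB xB xn; move: xB; rewrite -{1}(cat_take_drop j B) (drop_nth x0 jB).
by rewrite !mem_cat in_cons (negbTE xn).
Qed.

Lemma mem_remove2 (T : eqType) (B : seq T) x j :
  x \in take j B ++ drop j.+1 B -> x \in B.
Proof.
rewrite mem_cat => /orP [/mem_take //|/mem_drop //].
Qed.

Lemma uniq_aux (B1 B2 : seq {ffun 'I_n -> bool}) :
  (forall a, capb sigma B1 a <-> capb sigma B2 a) -> irredundant sigma B1 ->
  forall b1, b1 \in B1 ->
    exists2 b2, b2 \in B2 & forall a, pb sigma b1 a <-> pb sigma b2 a.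
Proof.
move=> H12 irr b1 b1B.
have [b2 b2B s21] : exists2 b2, b2 \in B2 & forall i, b2 i -> b1 i.
  apply: capb_sub => a /H12 Ha; exact: Ha.
have [b1' b1'B s12] : exists2 b1', b1' \in B1 & forall i, b1' i -> b2 i.
  apply: capb_sub => a /H12 Ha; exact: Ha.
case: (eqVneq b1' b1) => [E|ne].
  exists b2 => // a; split; apply: pb_sub => // i; first by rewrite -E => /s12.
set j := index b1 B1.
have jB : (j < size B1)%N by rewrite index_mem.
exfalso; apply: (irr j jB) => a; split.
- move=> Ha b bB; case: (eqVneq b b1) => [->|bn].
    apply: (pb_sub (b1 := b1')) => [i /s12 /s21 //|].
    apply: Ha; apply: (mem_remove (x0 := b1) jB) => //; by rewrite nth_index.
  apply: Ha; apply: (mem_remove (x0 := b1) jB) => //; by rewrite nth_index.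
- move=> Ha b /mem_remove2; exact: Ha.
Qed.
End Aux7.

Lemma sum_ord_pred1 n (F : 'I_n -> nat) i0 : (\sum_(i < n) F i * (i == i0) = F i0)%N.
Proof. by rewrite sum_pred1_nat ?index_enum_uniq // mem_index_enum muln1. Qed.

Lemma sum_ordn_pred1 s (F : nat -> nat) (l0 : nat) :
  (\sum_(l < s) F l * (l == l0 :> nat) = F l0 * (l0 < s))%N.
Proof. by rewrite -(big_mkord xpredT (fun l => F l * (l == l0))%N) sum_pred1_nat ?iota_uniq // mem_index_iota. Qed.

Lemma cm_le_split (I : choiceType) (A B : cmonom I) :
  (forall y, A y <= B y)%N -> B = mmul (divcm B A) A.
Proof. by move=> H; apply/eqP/cmP => y; rewrite cmM divcmE subnK. Qed.

Section Aux8.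
Context (k : fieldType) (sigma : {rmorphism k -> k}) (n : nat).
Local Notation I := ('I_n * nat)%type.
Local Notation CM := (cmonom I).
Local Notation D := (dpoly k n).
Local Notation mU M := (mkmalgU M (1 : k) : D).
Local Notation ds := (@dsigma k sigma n).

Lemma dmonom_iter (u : 'I_n -> {poly nat}) K :
  iter K ds (dmonom sigma u) =
  mU (\big[mmul/mone]_(i < n) \big[mmul/mone]_(l < size (u i))
        \big[mmul/mone]_(c0 < ((u i)`_l)%R) ucm (i, (l + K)%N)).
Proof.
rewrite /dmonom iter_ds_prod [in RHS]malgU_prod; apply: eq_bigr => i _.
rewrite /dpow iter_ds_prod [in RHS]malgU_prod; apply: eq_bigr => l _.
rewrite iter_dsX [in RHS]malgU_prod prodr_const_ord (iter_ds_dvar sigma l i 0).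
rewrite (iter_ds_dvar sigma K i (0 + l)%N) add0n dvarE; reflexivity.
Qed.

Lemma dpow_mono (P : pred 'I_n) (jf : 'I_n -> nat) (g : {poly nat}) :
  dpow sigma (\prod_(i < n | P i) dvar k i (jf i)) g =
  mU (\big[mmul/mone]_(t < size g) \big[mmul/mone]_(c0 < (g`_t)%R)
        \big[mmul/mone]_(i < n | P i) ucm (i, (jf i + t)%N)).
Proof.
rewrite /dpow [in RHS]malgU_prod; apply: eq_bigr => t _.
rewrite [in RHS]malgU_prod prodr_const_ord iter_ds_prod [in RHS]malgU_prod.
apply: (congr1 (fun x => x ^+ (g`_t)%R)).
by apply: eq_bigr => i _; rewrite (iter_ds_dvar sigma t i (jf i)) dvarE.
Qed.
End Aux8.

Section Num.
Context (n : nat).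
Local Notation I := ('I_n * nat)%type.
Local Notation CM := (cmonom I).

Lemma A_val (u : 'I_n -> {poly nat}) K i0 j0 :
  ((\big[mmul/mone]_(i < n) \big[mmul/mone]_(l < size (u i))
      \big[mmul/mone]_(c0 < ((u i)`_l)%R) ucm (i, (l + K)%N) : CM) (i0, j0) =
   \sum_(l < size (u i0)) ((u i0)`_l)%R * (l + K == j0))%N.
Proof.
rewrite cmprodE.
transitivity (\sum_(i < n) (\sum_(l < size (u i)) ((u i)`_l)%R * (l + K == j0)) * (i == i0))%N;
  last by rewrite sum_ord_pred1.
apply: eq_bigr => i _; rewrite cmprodE big_distrl /=; apply: eq_bigr => l _.
rewrite cmprodE; under eq_bigr do rewrite cmU xpair_eqE.
rewrite sum_const_nat.
by case: (i == i0); case: (_ == j0); rewrite /= ?muln0 ?muln1 ?mul0n ?mul1n.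
Qed.

Lemma ZG_ge (P : pred 'I_n) (jf : 'I_n -> nat) (g : {poly nat}) i0 j0 t0 :
  P i0 -> (jf i0 <= j0)%N -> t0 = (j0 - jf i0)%N -> (t0 < size g)%N ->
  ((g`_t0)%R <= ((\big[mmul/mone]_(t < size g) \big[mmul/mone]_(c0 < (g`_t)%R)
        \big[mmul/mone]_(i < n | P i) ucm (i, (jf i + t)%N)) : CM) (i0, j0))%N.
Proof.
move=> Pi0 hj ht tg; rewrite cmprodE (bigD1 (Ordinal tg)) //=.
apply: leq_trans (leq_addr _ _).
rewrite cmprodE sum_const_nat cmprodE (bigD1 i0) //= cmU xpair_eqE eqxx /= ht subnKC // eqxx.
by rewrite leq_pmull.
Qed.
End Num.

Section Aux10.
Context (k : fieldType) (sigma : {rmorphism k -> k}) (n : nat).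
Local Notation I := ('I_n * nat)%type.
Local Notation CM := (cmonom I).
Local Notation D := (dpoly k n).
Local Notation mU M := (mkmalgU M (1 : k) : D).
Local Notation ds := (@dsigma k sigma n).

Lemma last_nseq_nat m (x : nat) : last x (nseq m x) = x.
Proof. by elim: m. Qed.

Lemma mono_in_J (J : D -> Prop) (HJ : is_sigma_ideal sigma J) (Jp : is_perfect sigma J)
  (u : 'I_n -> {poly nat}) (Ju : J (dmonom sigma u)) (m : CM)
  (Hm : forall i, u i != 0 -> has (fun x : I => x.1 == i) (finsupp m)) (c : k) :
  J (mkmalgU m c).
Proof.
have Hid : is_ideal J by case: HJ.
pose jf (i : 'I_n) := (head (i, 0%N) [seq x <- enum_fset (finsupp m) | x.1 == i]).2.
have Hjf i : u i != 0 -> (i, jf i) \in finsupp m.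
  move=> /Hm; rewrite has_filter /jf.
  case E: [seq x <- enum_fset (finsupp m) | x.1 == i] => [|y s] // _ /=.
  have : y \in [seq x <- enum_fset (finsupp m) | x.1 == i] by rewrite E mem_head.
  by rewrite mem_filter => /andP [/eqP <- ym]; rewrite -surjective_pairing.
pose Z : CM := \big[mmul/mone]_(i < n | u i != 0) ucm (i, jf i).
have ZE y : (Z y <= m y)%N.
  case: y => i0 j0.
  have -> : Z (i0, j0) = ((u i0 != 0) && (jf i0 == j0)) :> nat.
    rewrite /Z cmprodE big_mkcond /=.
    transitivity (\sum_(i < n) ((u i != 0%R) && (jf i == j0)) * (i == i0))%N; last first.
      by rewrite sum_ord_pred1.
    apply: eq_bigr => i _; rewrite cmU xpair_eqE.
    by case: (u i != 0); case: (i == i0); case: (jf i == j0).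
  case: (boolP ((u i0 != 0) && (jf i0 == j0))) => [/andP [ui /eqP <-]|//].
  by rewrite lt0n cmE_neq0 Hjf.
rewrite (cm_le_split ZE) malgUM; apply: ideal_mull => //.
have -> : mU Z = \prod_(i < n | u i != 0) dvar k i (jf i).
  by rewrite [in LHS]malgU_prod.
pose K := (\max_(i < n) jf i)%N.
pose Smax := (\max_(i < n) size (u i))%N.
pose Dm := (\max_(i < n) \max_(l < size (u i)) ((u i)`_l)%R).+1%N.
pose N := (K + Smax).+1%N.
pose g : {poly nat} := Poly (nseq N Dm).
have gE t : (g`_t = if (t < N)%N then Dm else 0%N)%R by rewrite coef_Poly nth_nseq.
have gsz : size g = N.
  by rewrite /g (PolyK (c := 0%N)) ?size_nseq // /N /= last_nseq_nat.
have gnz : g != 0 by rewrite -size_poly_gt0 gsz.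
apply: (Jp _ g gnz); rewrite dpow_mono.
have JA := sig_iter K HJ Ju; rewrite dmonom_iter in JA.
set A := (\big[mmul/mone]_(i < n) _) in JA.
set ZG := (\big[mmul/mone]_(t < size g) _).
have leAZ y : (A y <= ZG y)%N.
  case: y => i0 j0; rewrite /A A_val.
  case: (leqP K j0) => hK; last first.
    rewrite big1 // => l _.
    have -> : ((l + K)%N == j0) = false by apply/negbTE; rewrite neq_ltn; apply/orP; right; lia.
    by rewrite muln0.
  have -> : (\sum_(l < size (u i0)) ((u i0)`_l)%R * ((l + K)%N == j0))%N =
            (\sum_(l < size (u i0)) ((u i0)`_l)%R * (l == j0 - K :> nat))%N.
    apply: eq_bigr => l _; congr (_ * nat_of_bool _)%N.
    by apply/eqP/eqP => H; lia.
  rewrite sum_ordn_pred1.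
  case: (ltnP (j0 - K) (size (u i0))) => hs; last by rewrite muln0.
  rewrite muln1.
  have jK : (jf i0 <= K)%N by rewrite /K (bigD1 i0) //= leq_maxl.
  have sS : (size (u i0) <= Smax)%N by rewrite /Smax (bigD1 i0) //= leq_maxl.
  have ui0 : u i0 != 0 by rewrite -size_poly_gt0; lia.
  have ht : (j0 - jf i0 < size g)%N by rewrite gsz /N; lia.
  apply: leq_trans (ZG_ge (P := fun i => u i != 0) (jf := jf) ui0 _ erefl ht); last by lia.
  rewrite gE ifT; last by rewrite -gsz.
  rewrite /Dm; apply: leq_trans (leqnSn _).
  rewrite (bigD1 i0) //=; apply: leq_trans (leq_maxl _ _).
  by rewrite (bigD1 (Ordinal hs)) //= leq_maxl.
rewrite (cm_le_split leAZ) malgUM; apply: ideal_mull => //.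
Qed.
End Aux10.

Definition decP (P : Prop) : bool := if excluded_middle_informative P then true else false.
Lemma decPP (P : Prop) : decP P <-> P.
Proof. by rewrite /decP; case: excluded_middle_informative. Qed.

Theorem theorem6p3 (k : fieldType) (sigma : {rmorphism k -> k}) (n : nat)
    (S : ('I_n -> {poly nat}) -> Prop) :
  [pchar k] =i pred0 ->
  (exists B : seq {ffun 'I_n -> bool},
      forall a, monomial_perfect_ideal sigma S a <-> capb sigma B a) /\
  (forall B1 B2 : seq {ffun 'I_n -> bool},
      (forall a, monomial_perfect_ideal sigma S a <-> capb sigma B1 a) ->
      (forall a, monomial_perfect_ideal sigma S a <-> capb sigma B2 a) ->
      irredundant sigma B1 -> irredundant sigma B2 ->
      (forall b1, b1 \in B1 ->
         exists2 b2, b2 \in B2 & forall a, pb sigma b1 a <-> pb sigma b2 a) /\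
      (forall b2, b2 \in B2 ->
         exists2 b1, b1 \in B1 & forall a, pb sigma b2 a <-> pb sigma b1 a)).
Proof.
move=> _; split; last first.
  move=> B1 B2 H1 H2 irr1 irr2; split.
  - apply: uniq_aux => // a; split => Ha; [apply/H2/H1 | apply/H1/H2] => //.
  - apply: uniq_aux => // a; split => Ha; [apply/H1/H2 | apply/H2/H1] => //.
pose P (b : {ffun 'I_n -> bool}) := forall u, S u -> pb sigma b (dmonom sigma u).
exists [seq b <- enum {ffun 'I_n -> bool} | decP (P b)] => a; split.
  move=> Ha b; rewrite mem_filter => /andP [/decPP Pb _].
  apply: Ha; [exact: pb_sigma_ideal | exact: pb_perfect |].
  by move=> x [u Su ->]; apply: Pb.
move=> Ha J HJ Jp Jg.
rewrite (monalgE a); apply: ideal_sum; first by case: HJ.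
move=> m ma.
pose b := [ffun i => ~~ has (fun x : ('I_n * nat)%type => x.1 == i) (finsupp m)].
case: (classic (P b)) => [Pb|nPb].
  exfalso.
  have bB : b \in [seq b <- enum {ffun 'I_n -> bool} | decP (P b)].
    by rewrite mem_filter mem_enum andbT; apply/decPP.
  have := Ha b bB; rewrite pbE => /(congr1 (mcoeff m)); rewrite phi_coef mcoeff0.
  have -> : good b m.
    apply/allP => x xm; rewrite ffunE negbK; apply/hasP; by exists x.
  by move/eqP; rewrite mcoeff_eq0 ma.
have [u Hu] := not_all_ex_not _ _ nPb.
have [Su nu] := imply_to_and _ _ Hu.
have Ju : J (dmonom sigma u) by apply: Jg; exists u.
apply: (mono_in_J HJ Jp Ju) => i ui; apply/negPn/negP => nh; apply: nu.
by apply: (dmonom_pb (i := i)) => //; rewrite ffunE.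
Qed.
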